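(* Let $\sigma>0$, $\lambda\ne0$, $T>0$, and let $\kappa(t,s)=\frac{\sigma^2}{\lambda^2+\sigma^2t}\mathbbm{1}_{s\le t}$ for $s,t\in[0,T]$ (this is $\lambda^{-2}\tilde K^{t,\lambda}(t,s)\mathbbm 1_{s\le t}$ for the constant covariance $K\equiv\sigma^2$). Define $H(t,s)=\sum_{n\ge0}\kappa^{(n+1)}(t,s)$, where $\kappa^{(1)}=\kappa$ and $\kappa^{(n+1)}(t,s)=\int_s^t\kappa(t,v)\kappa^{(n)}(v,s)\,dv$. Then \[ H(t,s)=\frac{\sigma^2}{\lambda^2+\sigma^2s}\mathbbm 1_{s\le t}. \] *)

(* Defs.v *)
From Stdlib Require Import Reals.
From Coquelicot Require Import Coquelicot.
Open Scope R_scope.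

Definition kappa (sigma lambda : R) (t s : R) : R :=
  if Rle_dec s t then sigma ^ 2 / (lambda ^ 2 + sigma ^ 2 * t) else 0.

(* kappa_iter n = kappa^{(n+1)}:
   kappa^{(1)} = kappa,
   kappa^{(n+1)}(t,s) = int_s^t kappa(t,v) kappa^{(n)}(v,s) dv  (Riemann integral) *)
Fixpoint kappa_iter (sigma lambda : R) (n : nat) : R -> R -> R :=
  match n with
  | O => kappa sigma lambda
  | S m => fun t s =>
      RInt (fun v => kappa sigma lambda t v * kappa_iter sigma lambda m v s) s t
  end.

Definition H (sigma lambda : R) (t s : R) : R :=
  Series (fun n => kappa_iter sigma lambda n t s).

(* Main.v *)
Require Import Defs.
From Stdlib Require Import Reals Lra.
From Coquelicot Require Import Coquelicot.
Open Scope R_scope.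

Lemma kit_zero sigma lambda n : forall t s, t < s -> kappa_iter sigma lambda n t s = 0.
Proof.
  induction n as [|n IH]; intros t s Hts; simpl.
  - unfold kappa. destruct (Rle_dec s t); [lra|reflexivity].
  - rewrite (RInt_ext _ (fun _ => 0)).
    + rewrite RInt_const. exact (@scal_zero_r R_AbsRing R_ModuleSpace (t - s)).
    + intros x Hx. rewrite Rmin_right in Hx by lra. rewrite Rmax_left in Hx by lra.
      unfold kappa. destruct (Rle_dec x t); [lra|apply Rmult_0_l].
Qed.

Lemma kit_form sigma lambda n : 0 < lambda ^ 2 -> 0 < sigma ^ 2 ->
  forall t s, 0 <= s <= t -> kappa_iter sigma lambda n t s =
   sigma ^ 2 / (lambda ^ 2 + sigma ^ 2 * t) *
   ((ln (lambda ^ 2 + sigma ^ 2 * t) - ln (lambda ^ 2 + sigma ^ 2 * s)) ^ n / INR (Factorial.fact n)).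
Proof.
  intros Ha Hb. set (a := lambda ^ 2) in *. set (b := sigma ^ 2) in *.
  induction n as [|n IH]; intros t s Hst.
  - simpl. unfold kappa. destruct (Rle_dec s t); [|lra]. fold a b. field. nra.
  - simpl kappa_iter.
    destruct (Req_dec s t) as [<-|Hne].
    + rewrite RInt_point. rewrite Rminus_diag. assert (E: forall x:R, x = 0 -> zero = x) by (intros x ->; reflexivity). apply E. rewrite pow_i by (apply Nat.lt_0_succ). unfold Rdiv. ring.
    + rewrite (RInt_ext _ (fun v => b / (a + b * t) *
          (b / (a + b * v) * ((ln (a + b * v) - ln (a + b * s)) ^ n / INR (Factorial.fact n))))).
      2: { intros x Hx. rewrite Rmin_left in Hx by lra. rewrite Rmax_right in Hx by lra.
           rewrite IH by lra. unfold kappa. destruct (Rle_dec x t); [|lra]. reflexivity. }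
      set (g := fun v => b / (a + b * t) *
          (b / (a + b * v) * ((ln (a + b * v) - ln (a + b * s)) ^ n / INR (Factorial.fact n)))).
      set (F := fun v => b / (a + b * t) *
          ((ln (a + b * v) - ln (a + b * s)) ^ S n / INR (Factorial.fact (S n)))).
      assert (H1 : forall x, Rmin s t <= x <= Rmax s t -> is_derive F x (g x)).
      { intros x Hx. rewrite Rmin_left in Hx by lra. rewrite Rmax_right in Hx by lra.
        unfold F, g. auto_derive.
        { nra. }
        change (match n with 0%nat => 1 | S _ => INR n + 1 end) with (INR (S n)).
        change (Factorial.fact n + n * Factorial.fact n)%nat with (S n * Factorial.fact n)%nat.
        rewrite mult_INR, S_INR.
        match goal with |- ?x = ?y => change (@eq R x y) end. change RinvImpl.Rinv with Rinv. unfold Rminus. generalize ((ln (a + b * x) + - ln (a + b * s)) ^ n); intro P. field. pose proof (pos_INR n). split; [apply INR_fact_neq_0|]. split; [nra|split; [nra|lra]]. }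
      assert (H2 : forall x, Rmin s t <= x <= Rmax s t -> continuous g x).
      { intros x Hx. rewrite Rmin_left in Hx by lra. rewrite Rmax_right in Hx by lra.
        apply (ex_derive_continuous (K:=R_AbsRing) (V:=R_NormedModule) g). unfold g. auto_derive.
        split; [nra|split;[nra|auto]]. }
      rewrite (is_RInt_unique _ _ _ _ (is_RInt_derive F g s t H1 H2)).
      change (minus (F t) (F s)) with (F t - F s). unfold F.
      rewrite Rminus_diag, (pow_i (S n)) by (apply Nat.lt_0_succ).
      field. split; [apply INR_fact_neq_0| nra].
Qed.

Lemma zser : is_series (fun _ : nat => 0) 0.
Proof.
  assert (E := is_series_scal 0 _ _ (is_exp_Reals 0)).
  unfold scal in E; simpl in E; unfold mult in E; simpl in E.
  rewrite Rmult_0_l in E.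
  eapply is_series_ext; [|exact E]. intros n; simpl. ring.
Qed.

Theorem lemma5p2 (sigma lambda T : R) :
  0 < sigma -> lambda <> 0 -> 0 < T ->
  forall t s : R, 0 <= t <= T -> 0 <= s <= T ->
    ex_series (fun n => kappa_iter sigma lambda n t s) /\
    H sigma lambda t s =
      (if Rle_dec s t then sigma ^ 2 / (lambda ^ 2 + sigma ^ 2 * s) else 0).
Proof.
  intros Hs Hl HT t s Ht Hs'.
  assert (Ha : 0 < lambda ^ 2) by (simpl; rewrite Rmult_1_r; apply Rsqr_pos_lt; auto).
  assert (Hb : 0 < sigma ^ 2) by (simpl; nra).
  assert (HS : is_series (fun n => kappa_iter sigma lambda n t s)
      (if Rle_dec s t then sigma ^ 2 / (lambda ^ 2 + sigma ^ 2 * s) else 0)).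
  { destruct (Rle_dec s t) as [Hst|Hst].
    - set (L := ln (lambda ^ 2 + sigma ^ 2 * t) - ln (lambda ^ 2 + sigma ^ 2 * s)).
      pose proof (is_series_scal (sigma ^ 2 / (lambda ^ 2 + sigma ^ 2 * t)) _ _ (is_exp_Reals L)) as E.
      replace (sigma ^ 2 / (lambda ^ 2 + sigma ^ 2 * s)) with
        (scal (sigma ^ 2 / (lambda ^ 2 + sigma ^ 2 * t)) (exp L)).
      + eapply is_series_ext; [|exact E].
        intros n. simpl. rewrite kit_form by (auto; lra).
        unfold scal; simpl; unfold mult; simpl. rewrite pow_n_pow. unfold L, Rdiv. reflexivity.
      + unfold scal; simpl; unfold mult; simpl. unfold L. unfold Rminus.
        rewrite exp_plus, exp_Ropp, !exp_ln by nra. field. nra.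
    - eapply is_series_ext; [|exact zser].
      intros n. rewrite kit_zero by lra. reflexivity. }
  split; [eexists; exact HS|]. unfold H. apply is_series_unique. exact HS.
Qed.
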